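(* Let $k\ge4$ and $d\ge1$. Let $x$ be a monomial of degree $(k-2)(2^d-1)$ in $P_k$. If $\omega_1(x)<k$ and there is $r>d$ with $\omega_r(x)>0$, then $x\in P_k^-((k-2)|^d)+\mathcal A(d-1)^+P_k$.
   Context: $P_k=\mathbb F_2[x_1,\dots,x_k]$, $\deg x_i=1$, a module over the mod-2 Steenrod algebra $\mathcal A$. $\mathcal A(d-1)$ is the sub-Hopf algebra generated by $Sq^i$, $0\le i<2^d$, and $\mathcal A(d-1)^+$ its augmentation ideal. For $x=x_1^{a_1}\cdots x_k^{a_k}$, $\omega_i(x)=\sum_j\alpha_{i-1}(a_j)$, with $\alpha_r(a)$ the $r$-th binary digit; weight vectors are ordered left-lexicographically. $(k-2)|^d$ is the weight vector with first $d$ entries $k-2$ and the rest $0$; $P_k^-((k-2)|^d)$ is spanned by monomials $y$ of degree $(k-2)(2^d-1)$ with $\omega(y)<(k-2)|^d$. *)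

(* Defs.v *)
From HB Require Import structures.
From mathcomp Require Import all_boot all_order all_algebra.
From mathcomp Require Import mpoly.
Set Implicit Arguments. Unset Strict Implicit. Unset Printing Implicit Defensive.
Import GRing.Theory.
Local Open Scope ring_scope.

(* Sq^i on a monomial x^m, by the Cartan formula and Sq^j(x^a) = C(a,j) x^(a+j):
   Sq^i(x_1^{a_1}...x_k^{a_k}) = sum_{e_1+...+e_k = i} prod_j C(a_j,e_j) x_j^{a_j+e_j}. *)
Definition Sqmon (k i : nat) (m : 'X_{1..k}) : {mpoly 'F_2[k]} :=
  \sum_(e : {ffun 'I_k -> 'I_i.+1} | (\sum_(j < k) (e j : nat))%N == i)
     (\prod_(j < k) 'C(m j, e j))%:R *: 'X_[[multinom (m j + e j)%N | j < k]].

Definition Sq (k i : nat) (p : {mpoly 'F_2[k]}) : {mpoly 'F_2[k]} :=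
  \sum_(m <- msupp p) p@_m *: Sqmon i m.

Definition Sqw (k : nat) (w : seq nat) (p : {mpoly 'F_2[k]}) : {mpoly 'F_2[k]} :=
  foldr (fun i q => Sq i q) p w.

(* A(d-1)^+ P_k : the F_2-span of all theta(f), theta a nonempty product of
   generators Sq^i with 0 < i < 2^d (these products span A(d-1)^+). *)
Inductive hitd (k d : nat) : {mpoly 'F_2[k]} -> Prop :=
| hitd0 : hitd d 0
| hitdD p q : hitd d p -> hitd d q -> hitd d (p + q)
| hitdSq (w : seq nat) (f : {mpoly 'F_2[k]}) :
    w != [::] -> all (fun i => (0 < i < 2 ^ d)%N) w -> hitd d (Sqw w f).

Definition alpha (r a : nat) : nat := odd (a %/ 2 ^ r).

Definition omega (k i : nat) (m : 'X_{1..k}) : nat :=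
  (\sum_(j < k) alpha i.-1 (m j))%N.

Definition wtop (k d i : nat) : nat := if (1 <= i <= d)%N then (k - 2)%N else 0%N.

Definition weight_lt (k d : nat) (m : 'X_{1..k}) : Prop :=
  exists r : nat, (1 <= r)%N /\
    (forall s : nat, (1 <= s < r)%N -> omega s m = wtop k d s) /\
    (omega r m < wtop k d r)%N.

Definition Pminus (k d : nat) (p : {mpoly 'F_2[k]}) : Prop :=
  forall m : 'X_{1..k}, m \in msupp p ->
    mdeg m = ((k - 2) * (2 ^ d - 1))%N /\ weight_lt d m.

(* Main.v *)
Require Import Defs.
From HB Require Import structures.
From mathcomp Require Import all_boot all_order all_algebra.
From mathcomp Require Import mpoly.
From mathcomp Require Import zify ring.

Lemma lucas2 m n : odd 'C(m, n) = odd 'C(m %/ 2, n %/ 2) && (odd n ==> odd m).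
Proof.
elim: m n => [|m IH] [|n].
- by [].
- rewrite !bin0n. case: n => [|n] //=. 
  have -> : (n.+2 %/ 2 == 0) = false by lia. by [].
- by rewrite !bin0.
rewrite binS oddD !IH.
have e1 : m.+1 %/ 2 = m %/ 2 + odd m by lia.
have e2 : n.+1 %/ 2 = n %/ 2 + odd n by lia.
rewrite e1 e2 /=.
case: (odd m); case: (odd n); rewrite ?addn0 ?addn1 /= ?andbT ?andbF ?addbF ?addFb //.
all: by rewrite ?binS ?oddD ?addbb.
Qed.

Lemma lucas_bit u a e : odd 'C(a, e) -> 2^u %| e -> odd (e %/ 2^u) -> odd (a %/ 2^u).
Proof.
elim: u a e => [|u IH] a e.
  by rewrite expn0 !divn1 lucas2 => /andP[_ /implyP].
rewrite lucas2 => /andP[hC _] hd ho.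
have h2 : 2 %| e by apply: dvdn_trans hd; rewrite expnS dvdn_mulr.
rewrite expnS divnMA.
apply: (IH _ (e %/ 2)) => //.
  by rewrite (dvdn_divRL _ h2) -expnSr.
move: ho; rewrite expnS divnMA; exact: id.
Qed.

Lemma lucas_pow u a : odd (a %/ 2^u) -> odd 'C(a, 2^u).
Proof.
elim: u a => [|u IH] a.
  by rewrite expn0 divn1 bin1.
move=> h. rewrite lucas2 expnS mulKn // oddM /= andbT.
apply: IH. move: h; rewrite expnS divnMA. exact: id.
Qed.

Lemma divD_dvd u y e : 2^u %| e -> (y + e) %/ 2^u = y %/ 2^u + e %/ 2^u.
Proof. by move=> h; rewrite addnC divnDl // addnC. Qed.

Lemma alpha_low i y c : 2^i.+1 %| c -> alpha i (y + c) = alpha i y.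
Proof.
move/dvdnP=> [w ->]. rewrite /alpha expnS mulnA addnC divnMDl ?expn_gt0 //.
by rewrite oddD oddM /= andbF.
Qed.

Lemma alpha_le1 i a : alpha i a <= 1.
Proof. by rewrite /alpha; case: odd. Qed.

Lemma bits_sum v B : \sum_(i < B) 2^i * alpha i v = v %% 2^B.
Proof.
elim: B => [|B IH]; first by rewrite big_ord0 expn0 modn1.
rewrite big_ord_recr /= IH /alpha.
have hp : 0 < 2^B by rewrite expn_gt0.
rewrite {3}(divn_eq v (2^B)).
set w := v %/ 2^B. set r := v %% 2^B.
have hr : r < 2^B by rewrite ltn_mod.
rewrite {2}(divn_eq w 2) modn2 expnS.
have -> : (w %/ 2 * 2 + odd w) * 2 ^ B + r = w %/ 2 * (2 * 2^B) + (r + 2^B * odd w).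
  by rewrite mulnDl -mulnA (mulnC (odd w)); lia.
rewrite modnMDl modn_small //.
by case: (odd w); lia.
Qed.

Lemma geom B : \sum_(i < B) 2^i = 2^B - 1.
Proof.
elim: B => [|B IH]; first by rewrite big_ord0.
rewrite big_ord_recr /= IH expnS.
have : 0 < 2^B by rewrite expn_gt0. lia.
Qed.

Lemma sum_mod k (x : 'X_{1..k}) (B : nat) :
  \sum_(j < k) (x j %% 2^B) = \sum_(i < B) 2^i * omega i.+1 x.
Proof.
under eq_bigr => j _ do rewrite -bits_sum.
rewrite exchange_big; apply: eq_bigr => i _.
by rewrite /omega big_distrr.
Qed.

Lemma omega_le k i (x : 'X_{1..k}) : omega i x <= k.
Proof.
rewrite /omega; apply: (leq_trans (n := \sum_(j < k) 1)).
  by apply: leq_sum => j _; exact: alpha_le1.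
by rewrite sum1_card card_ord.
Qed.

Lemma omega_full k i (x : 'X_{1..k}) : omega i x = k -> forall j, alpha i.-1 (x j) = 1.
Proof.
move=> h j; apply/eqP; rewrite eqn_leq alpha_le1 /=; rewrite lt0n; apply/negP => /eqP h0.
have : omega i x <= k.-1.
  rewrite /omega (bigD1 j) //= h0 add0n.
  apply: (leq_trans (n := \sum_(l < k | l != j) 1)).
    by apply: leq_sum => l _; exact: alpha_le1.
  rewrite sum1_card cardC1 card_ord. by [].
rewrite h. case: k x j h h0 => [|k] x j; first by case: j.
by rewrite /= ltnn.
Qed.

Lemma omega_notfull k i (x : 'X_{1..k}) : omega i x < k -> exists j, alpha i.-1 (x j) = 0.
Proof.
move=> h; case: (pickP (fun j => alpha i.-1 (x j) == 0)) => [j /eqP hj|H]; first by exists j.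
have : omega i x = k.
  rewrite /omega -[k in RHS]card_ord -sum1_card; apply: eq_bigr => j _.
  move: (H j) (alpha_le1 i.-1 (x j)) => /= /negbT. case: (alpha _ _) => // [[|]] //.
by move=> e; rewrite e ltnn in h.
Qed.

Lemma omega_pos k i (x : 'X_{1..k}) : 0 < omega i x -> exists j, 0 < alpha i.-1 (x j).
Proof.
move=> h; case: (pickP (fun j => 0 < alpha i.-1 (x j))) => [j hj|H]; first by exists j.
suff : omega i x = 0 by move=> e; rewrite e in h.
rewrite /omega big1 // => j _. by move: (H j) => /= /negbT; rewrite lt0n negbK => /eqP.
Qed.

Lemma hyp_conv (k d : nat) (x : 'X_{1..k}) :
  (exists r : nat, (d < r)%N /\ (0 < omega r x)%N) -> exists j : 'I_k, (2 ^ d <= x j)%N.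
Proof.
case=> r [hr /omega_pos [j hj]]; exists j.
have h1 : 1 <= x j %/ 2^r.-1.
  by move: hj; rewrite /alpha; case: (x j %/ 2^r.-1) => //.
rewrite leq_divRL ?expn_gt0 // mul1n in h1.
apply: leq_trans h1; apply: leq_pexp2l => //. by move: hr; case: (r) => //.
Qed.

Lemma base_contra (k d : nat) (x : 'X_{1..k}) :
  mdeg x = ((k - 2) * (2 ^ d - 1))%N ->
  (forall i, 1 <= i <= d -> omega i x = (k-2)%N) -> (exists j : 'I_k, (2 ^ d <= x j)%N) -> False.
Proof.
move=> hdeg hom [j0 hj0].
have e1 : \sum_(j < k) (x j %% 2 ^ d) = ((k - 2) * (2 ^ d - 1))%N.
  rewrite sum_mod -geom big_distrr /=; apply: eq_bigr => i _.
  by rewrite hom; [exact: mulnC | rewrite /= ltn_ord].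
have : \sum_(j < k) (x j %% 2 ^ d) < \sum_(j < k) x j.
  rewrite (bigD1 j0) //= [X in _ < X](bigD1 j0) //=.
  rewrite -addSn; apply: leq_add.
    by apply: leq_trans hj0; rewrite ltn_mod expn_gt0.
  by apply: leq_sum => j _; apply: leq_mod.
by rewrite e1 -mdegE hdeg ltnn.
Qed.

Lemma par_key : forall K P E T : nat, 0 < P -> 0 < E -> K * (2 * P * E - 1) = K * (P - 1) + P * (K + 1) + 2 * P * T -> P * (2 * K * E) = P * (2 * K + 1 + 2 * T).
Proof. move=> K0 P0 E0 T0 hP0 hE1 h0; nia. Qed.

Lemma par (k d s : nat) (x : 'X_{1..k}) : 2 <= k -> 1 <= s <= d ->
  mdeg x = ((k - 2) * (2 ^ d - 1))%N ->
  (forall i, 1 <= i < s -> omega i x = (k-2)%N) -> omega s x <> k.-1.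
Proof.
move=> hk /andP[hs1 hsd] hdeg hom hw.
have e0 : mdeg x = \sum_(j < k) (x j %% 2^s) + 2^s * \sum_(j < k) (x j %/ 2^s).
  rewrite mdegE big_distrr -big_split /=; apply: eq_bigr => j _.
  by rewrite {1}(divn_eq (x j) (2^s)) addnC mulnC.
case: s hs1 hsd hom hw e0 => // s _ hsd hom hw.
rewrite sum_mod big_ord_recr /= hw.
have -> : \sum_(i < s) 2 ^ i * omega i.+1 x = (k-2) * (2^s - 1).
  rewrite -geom big_distrr /=; apply: eq_bigr => i _.
  by rewrite hom; [exact: mulnC | rewrite /= ltnS ltn_ord].
set T := \sum_(j < k) _.
have hE : 2 ^ d = 2^s.+1 * 2^(d - s.+1) by rewrite -expnD subnKC.
rewrite hdeg hE expnS.
set P := 2^s. set E := 2^(d - s.+1).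
have hP : 0 < P by rewrite expn_gt0.
have hE0 : 0 < E by rewrite expn_gt0.
set K := k - 2.
have hK : k.-1 = K + 1 by rewrite /K; lia.
rewrite hK.
move=> h.
have h2 := par_key _ _ _ _ hP hE0 h.
move/eqP: h2; rewrite eqn_pmul2l // => /eqP. lia.
Qed.

Set Implicit Arguments. Unset Strict Implicit. Unset Printing Implicit Defensive.
Import GRing.Theory.
Local Open Scope ring_scope.

Definition Dec (k d : nat) (f : {mpoly 'F_2[k]}) :=
  exists p q : {mpoly 'F_2[k]}, Pminus d p /\ hitd d q /\ f = p + q.

Definition good (k d : nat) (m : 'X_{1..k}) :=
  mdeg m = ((k - 2) * (2 ^ d - 1))%N /\ weight_lt d m.

Lemma Pminus0 k d : Pminus d (0 : {mpoly 'F_2[k]}).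
Proof. by move=> m; rewrite mcoeff_msupp mcoeff0 eqxx. Qed.

Lemma PminusD k d (p q : {mpoly 'F_2[k]}) : Pminus d p -> Pminus d q -> Pminus d (p + q).
Proof.
move=> hp hq m /msuppD_le; rewrite mem_cat => /orP[] h; [exact: hp | exact: hq].
Qed.

Lemma Pminus_sum k d (I : finType) (P : pred I) (F : I -> {mpoly 'F_2[k]}) :
  (forall i, P i -> Pminus d (F i)) -> Pminus d (\sum_(i | P i) F i).
Proof.
move=> h; apply: (big_ind (Pminus d)) => //; [exact: Pminus0 | exact: PminusD].
Qed.

Lemma Pminus_term k d (c : 'F_2) (m : 'X_{1..k}) :
  (c != 0 -> good d m) -> Pminus d (c *: 'X_[m]).
Proof.
move=> h m'; rewrite mcoeff_msupp mcoeffZ mcoeffX.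
case: (eqVneq m m') => [<- |hne]; last by rewrite mulr0 eqxx.
by rewrite mulr1 => /h.
Qed.

Lemma Dec0 k d : Dec d (0 : {mpoly 'F_2[k]}).
Proof. exists 0, 0; split; [exact: Pminus0 | split; [exact: hitd0 | by rewrite addr0]]. Qed.

Lemma DecD k d (f g : {mpoly 'F_2[k]}) : Dec d f -> Dec d g -> Dec d (f + g).
Proof.
move=> [p1 [q1 [h1 [h1' ->]]]] [p2 [q2 [h2 [h2' ->]]]].
exists (p1 + p2), (q1 + q2); split; first exact: PminusD.
split; first exact: hitdD.
by rewrite addrACA.
Qed.

Lemma Dec_sum k d (I : finType) (P : pred I) (F : I -> {mpoly 'F_2[k]}) :
  (forall i, P i -> Dec d (F i)) -> Dec d (\sum_(i | P i) F i).
Proof.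
move=> h; apply: (big_ind (Dec d)) => //; [exact: Dec0 | exact: DecD].
Qed.

Lemma Dec_hit k d (q : {mpoly 'F_2[k]}) : hitd d q -> Dec d q.
Proof. by move=> h; exists 0, q; split; [exact: Pminus0 | split => //; rewrite add0r]. Qed.

Lemma Dec_P k d (p : {mpoly 'F_2[k]}) : Pminus d p -> Dec d p.
Proof. by move=> h; exists p, 0; split => //; split; [exact: hitd0 | rewrite addr0]. Qed.

Lemma Sq_X k i (m : 'X_{1..k}) : Sq i 'X_[m] = Sqmon i m.
Proof. by rewrite /Sq msuppX big_seq1 mcoeffX eqxx scale1r. Qed.

Lemma F2nat n : (n%:R : 'F_2) = (odd n)%:R.
Proof.
rewrite {1}(divn_eq n 2) modn2 natrD natrM.
have -> : (2%:R : 'F_2) = 0 by apply: val_inj.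
by rewrite mulr0 add0r.
Qed.

Lemma char2 k (v : {mpoly 'F_2[k]}) : v + v = 0.
Proof.
rewrite -mulr2n -scaler_nat.
have -> : (2%:R : 'F_2) = 0 by apply: val_inj.
by rewrite scale0r.
Qed.

Definition pm (k P : nat) (j : 'I_k) : {ffun 'I_k -> 'I_P.+1} :=
  [ffun l => if l == j then ord_max else ord0].

Definition mono (k P : nat) (y : 'X_{1..k}) (e : {ffun 'I_k -> 'I_P.+1}) : 'X_{1..k} :=
  [multinom (y j + e j)%N | j < k].

Lemma pm_sum k P (j : 'I_k) : (\sum_(l < k) (pm P j l : nat))%N = P.
Proof.
rewrite (bigD1 j) //= big1 ?addn0; first by rewrite ffunE eqxx.
by move=> l /negbTE hl; rewrite ffunE hl.
Qed.

Lemma pm_inj k P : (0 < P)%N -> injective (@pm k P).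
Proof.
move=> hP j1 j2 /ffunP /(_ j1); rewrite !ffunE eqxx.
case: eqP => // _ /(congr1 val) /=. by move=> h; rewrite h in hP.
Qed.

Lemma Sqmon_split k P (y : 'X_{1..k}) : (0 < P)%N ->
  Sqmon P y = \sum_(j < k) ('C(y j, P))%:R *: 'X_[mono y (pm P j)] +
   \sum_(e : {ffun 'I_k -> 'I_P.+1} | ((\sum_(j < k) (e j : nat))%N == P) &&
        (e \notin [set pm P j | j : 'I_k]))
       (\prod_(j < k) 'C(y j, e j))%:R *: 'X_[mono y e].
Proof.
move=> hP.
rewrite /Sqmon (bigID (fun e => e \in [set pm P j | j : 'I_k])) /=.
congr (_ + _).
rewrite (eq_bigl (fun e => e \in [set pm P j | j : 'I_k])); last first.
  move=> e; apply/andP/idP => [[//]|h]; split => //.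
  by case/imsetP: h => j _ ->; rewrite pm_sum.
rewrite big_imset /=; last by move=> j1 j2 _ _; apply: pm_inj.
apply: eq_bigr => j _.
congr (_%:R *: _).
rewrite (bigD1 j) //= big1 ?muln1; first by rewrite ffunE eqxx.
by move=> l /negbTE hl; rewrite ffunE hl bin0.
Qed.

Local Close Scope ring_scope.

Lemma dvd_of_low (t v : nat) : (forall u, u < t -> ~~ odd (v %/ 2 ^ u)) -> 2 ^ t %| v.
Proof.
elim: t => [|t IH] h; first by rewrite expn0 dvd1n.
have /dvdnP [w hw] := IH (fun u hu => h u (ltnW hu)).
have := h t (ltnSn t); rewrite hw mulnK ?expn_gt0 // => hw2.
by rewrite expnS dvdn_pmul2r ?expn_gt0 // dvdn2.
Qed.

Lemma sum_lt (I : finType) (f g : I -> nat) (j0 : I) :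
  (forall i, f i <= g i) -> f j0 < g j0 -> \sum_i f i < \sum_i g i.
Proof.
move=> h h0; rewrite (bigD1 j0) //= [X in _ < X](bigD1 j0) //=.
rewrite -addSn; apply: leq_add => //; apply: leq_sum => i _; exact: h.
Qed.

Lemma swap2 k (f g : 'I_k -> nat) (a j : 'I_k) : a != j ->
  (forall l, l != a -> l != j -> f l = g l) ->
  \sum_l f l + g a + g j = \sum_l g l + f a + f j.
Proof.
move=> haj h.
have hja : j != a by rewrite eq_sym.
have ef : forall F : 'I_k -> nat, \sum_l F l = F a + (F j + \sum_(l | (l != a) && (l != j)) F l).
  by move=> F; rewrite (bigD1 a) //= (bigD1 j) //=.
rewrite !ef (eq_bigr g); last by move=> l /andP[h1 h2]; exact: h.
move: (\sum_(l | (l != a) && (l != j)) g l) => S; lia.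
Qed.

Lemma mono_val k P (y : 'X_{1..k}) (e : {ffun 'I_k -> 'I_P.+1}) l :
  mono y e l = y l + e l.
Proof. by rewrite /mono mnmE. Qed.

Lemma mdeg_mono k P (y : 'X_{1..k}) (e : {ffun 'I_k -> 'I_P.+1}) :
  mdeg (mono y e) = mdeg y + \sum_(l < k) (e l : nat).
Proof.
rewrite !mdegE -big_split /=; apply: eq_bigr => l _; exact: mono_val.
Qed.

Lemma pm_val k P (j l : 'I_k) : (pm P j l : nat) = (l == j) * P.
Proof. by rewrite /pm ffunE; case: (l == j) => /=; rewrite ?mul1n ?mul0n. Qed.
Lemma sum_delta k (a : 'I_k) c : \sum_(l < k) (l == a) * c = c.
Proof.
rewrite (bigD1 a) //= eqxx mul1n big1 ?addn0 //.
by move=> l /negbTE ->.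
Qed.

Lemma mdeg_xy k t (x y : 'X_{1..k}) (a : 'I_k) :
  (forall l, x l = y l + (l == a) * 2 ^ t) -> mdeg x = mdeg y + 2 ^ t.
Proof.
move=> h; rewrite !mdegE (eq_bigr _ (fun l _ => h l)) big_split /=.
by rewrite sum_delta.
Qed.

Lemma divS2 v t : (v + 2 ^ t) %/ 2 ^ t = v %/ 2 ^ t + 1.
Proof. by rewrite divD_dvd ?dvdnn // divnn expn_gt0. Qed.

Lemma alphaS v t : alpha t.+1 v = odd (v %/ 2 ^ t %/ 2).
Proof. by rewrite /alpha expnSr divnMA. Qed.

Lemma alpha_add_step u y e : 2 ^ u %| e -> odd 'C(y, e) ->
  alpha u (y + e) <= alpha u y /\ (odd (e %/ 2 ^ u) -> alpha u (y + e) < alpha u y).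
Proof.
move=> hd hc; rewrite /alpha divD_dvd // oddD.
case he: (odd (e %/ 2 ^ u)).
  by rewrite (@lucas_bit u y e hc hd he).
by rewrite addbF; split.
Qed.

Lemma odd_prod_all k (F : 'I_k -> nat) : odd (\prod_(j < k) F j) -> forall j, odd (F j).
Proof.
move=> h j; move: h; rewrite (bigD1 j) //= oddM => /andP[]. by [].
Qed.

Lemma good_e k d t (x y : 'X_{1..k}) (a : 'I_k) (e : {ffun 'I_k -> 'I_(2 ^ t).+1}) :
  t.+2 <= d ->
  (forall i, 1 <= i < t.+2 -> omega i x = k - 2) ->
  mdeg x = (k - 2) * (2 ^ d - 1) ->
  (forall l, x l = y l + (l == a) * 2 ^ t) ->
  (\sum_(j < k) (e j : nat)) == 2 ^ t ->
  e \notin [set pm (2 ^ t) j | j : 'I_k] ->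
  ((\prod_(j < k) 'C(y j, e j))%:R != 0 :> 'F_2)%R ->
  good d (mono y e).
Proof.
move=> htd hom hdeg hxy /eqP hsum hnot hc.
have hodd : forall l, odd 'C(y l, e l).
  apply: odd_prod_all; move: hc; rewrite F2nat; by case: odd.
have hlow : forall i l, i < t -> alpha i (y l) = alpha i (x l).
  move=> i l hi; rewrite hxy alpha_low //.
  by apply: dvdn_mull; apply: dvdn_exp2l.
split.
  by rewrite mdeg_mono hsum -hdeg (mdeg_xy hxy).
have [l0 hl0] : exists l, 0 < e l.
  case: (pickP (fun l => 0 < e l)) => [l h|H]; first by exists l.
  move: hsum; rewrite big1 => [h0|l _]; first by have := expn_gt0 2 t; lia.
  by move: (H l) => /= /negbT; rewrite lt0n negbK => /eqP.
have exP : exists u, [exists l, odd (e l %/ 2 ^ u)].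
  exists (trunc_log 2 (e l0)); apply/existsP; exists l0.
  have h1 := trunc_logP (isT : 1 < 2) hl0.
  have h2 := trunc_log_ltn (e l0) (isT : 1 < 2).
  set u := trunc_log 2 (e l0) in h1 h2 *.
  have hq1 : 1 <= e l0 %/ 2 ^ u by rewrite leq_divRL ?expn_gt0 // mul1n.
  have hq2 : e l0 %/ 2 ^ u < 2 by rewrite ltn_divLR ?expn_gt0 // -expnS.
  by have -> : e l0 %/ 2 ^ u = 1 by lia.
case: (ex_minnP exP) => t' /existsP [j0 hj0] hmin.
have hdvd : forall l, 2 ^ t' %| e l.
  move=> l; apply: dvd_of_low => u hu; apply/negP => ho.
  have : t' <= u by apply: hmin; apply/existsP; exists l.
  by rewrite leqNgt hu.
have ht' : t' < t.
  rewrite ltnNge; apply/negP => htt.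
  have hd2 : forall l, 2 ^ t %| e l.
    by move=> l; apply: dvdn_trans (hdvd l); apply: dvdn_exp2l.
  have hj0pos : 0 < e j0.
    by move: hj0; rewrite lt0n; apply: contraL => /eqP ->; rewrite div0n.
  have hge : 2 ^ t <= e j0 by apply: dvdn_leq.
  have hle : e j0 <= 2 ^ t by rewrite -ltnS ltn_ord.
  have hrest : \sum_(l | l != j0) (e l : nat) = 0.
    by move: hsum; rewrite (bigD1 j0) //=; lia.
  have hz : forall l, l != j0 -> (e l : nat) = 0.
    move=> l hl; apply/eqP; move/eqP: hrest; rewrite sum_nat_eq0 => /forallP /(_ l).
    by rewrite hl.
  move/negP: hnot; apply; apply/imsetP; exists j0 => //.
  apply/ffunP => l; apply/eqP; rewrite -val_eqE /= pm_val; apply/eqP.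
  case: (eqVneq l j0) => [->|hl]; first by rewrite mul1n; lia.
  by rewrite mul0n hz.
exists t'.+1; split => //; split.
  move=> s' /andP[h1 h2]; rewrite /wtop h1 /=.
  have -> : s' <= d by lia.
  rewrite -(hom s'); last by apply/andP; split => //; lia.
  rewrite /omega; apply: eq_bigr => l _.
  rewrite mono_val alpha_low; last first.
    apply: dvdn_trans (hdvd l); apply: dvdn_exp2l; lia.
  by rewrite hlow //; lia.
rewrite /wtop /=.
have -> : t'.+1 <= d by lia.
rewrite -(hom t'.+1); last by apply/andP; split => //; lia.
rewrite /omega /=.
rewrite [X in _ < X](eq_bigr (fun l => alpha t' (y l))); last by move=> l _; rewrite hlow.
apply: (sum_lt (j0 := j0)) => [l|]; rewrite mono_val.
  by case: (alpha_add_step (hdvd l) (hodd l)).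
by case: (alpha_add_step (hdvd j0) (hodd j0)) => _; apply.
Qed.

Lemma bitA q : odd (q + 1) = false -> odd ((q + 1) %/ 2) ->
  [/\ odd q, odd (q %/ 2) = false & (q + 1) %/ 4 = q %/ 4].
Proof. move=> h1 h2; split; lia. Qed.

Lemma bitB q : odd q -> odd (q %/ 2) -> odd (q + 1) = false /\ odd ((q + 1) %/ 2) = false.
Proof. move=> h1 h2; split; lia. Qed.

Lemma z_props k d t (x y : 'X_{1..k}) (a j : 'I_k) :
  4 <= k -> t.+2 <= d ->
  (forall i, 1 <= i < t.+2 -> omega i x = k - 2) ->
  omega t.+2 x = k ->
  mdeg x = (k - 2) * (2 ^ d - 1) ->
  (exists l : 'I_k, 2 ^ d <= x l) ->
  (forall l, x l = y l + (l == a) * 2 ^ t) ->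
  alpha t (x a) = 0 ->
  j != a -> odd 'C(y j, 2 ^ t) ->
  (forall i, 1 <= i < t.+3 -> omega i (mono y (pm (2 ^ t) j)) = k - 2) /\
  mdeg (mono y (pm (2 ^ t) j)) = (k - 2) * (2 ^ d - 1) /\
  (exists l : 'I_k, 2 ^ d <= mono y (pm (2 ^ t) j) l) /\
  omega 1 (mono y (pm (2 ^ t) j)) < k.
Proof.
move=> hk htd hom hfull hdeg [l0 hl0] hxy hxa hja hC.
set z := mono y (pm (2 ^ t) j).
have hz : forall l, z l = y l + (l == j) * 2 ^ t.
  by move=> l; rewrite /z mono_val pm_val.
have hfa := @omega_full k t.+2 x hfull.
have hyj : y j = x j by rewrite hxy (negbTE hja) mul0n addn0.
have hxj : alpha t (x j) = 1.
  rewrite -hyj /alpha (@lucas_bit t (y j) (2 ^ t) hC (dvdnn _)) //.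
  by rewrite divnn expn_gt0.
have hlow : forall i l, i < t -> alpha i (z l) = alpha i (x l).
  move=> i l hi; rewrite hz hxy !alpha_low //.
    by apply: dvdn_mull; apply: dvdn_exp2l.
  by apply: dvdn_mull; apply: dvdn_exp2l.
have hza : z a = y a by rewrite hz eq_sym (negbTE hja) mul0n addn0.
have hzo : forall l, l != a -> l != j -> z l = x l.
  move=> l h1 h2; by rewrite hz hxy (negbTE h1) (negbTE h2) !mul0n !addn0.
have hxa1 : alpha t.+1 (x a) = 1 by exact: hfa.
have hxj1 : alpha t.+1 (x j) = 1 by exact: hfa.
have ea : x a %/ 2 ^ t = y a %/ 2 ^ t + 1 by rewrite hxy eqxx mul1n divS2.
have ej : z j %/ 2 ^ t = x j %/ 2 ^ t + 1 by rewrite hz eqxx mul1n hyj divS2.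
have hxa0 := hxa. have hxj0 := hxj.
have bxa : odd (y a %/ 2 ^ t + 1) = false by move: hxa; rewrite /alpha ea; case: odd.
have bxa1 : odd ((y a %/ 2 ^ t + 1) %/ 2) by move: hxa1; rewrite alphaS ea; case: odd.
have bxj : odd (x j %/ 2 ^ t) by move: hxj; rewrite /alpha; case: odd.
have bxj1 : odd (x j %/ 2 ^ t %/ 2) by move: hxj1; rewrite alphaS; case: odd.
have [ba1 ba2 ba3] := bitA bxa bxa1.
have [bj1 bj2] := bitB bxj bxj1.
have hza0 : alpha t (z a) = 1 by rewrite hza /alpha ba1.
have hza1 : alpha t.+1 (z a) = 0 by rewrite hza alphaS ba2.
have hzj0 : alpha t (z j) = 0 by rewrite /alpha ej bj1.
have hzj1 : alpha t.+1 (z j) = 0 by rewrite alphaS ej bj2.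
have hom' : forall i, 1 <= i < t.+3 -> omega i z = k - 2.
  move=> i /andP[h1 h2].
  have [hi|hi] := ltnP i t.+1.
    rewrite -(hom i); last by apply/andP; split => //; clear -hi; lia.
    rewrite /omega; apply: eq_bigr => l _; apply: hlow; clear -h1 hi; lia.
  have [hi2|hi2] := ltnP i t.+2.
    have -> : i = t.+1 by clear -hi hi2; lia.
    have haj : a != j by rewrite eq_sym.
    have := @swap2 k (fun l => alpha t (z l)) (fun l => alpha t (x l)) a j haj.
    rewrite /= hza0 hzj0 hxa0 hxj0 => /(_ (fun l h1 h2 => congr1 _ (hzo l h1 h2))).
    have := hom t.+1; rewrite /omega /= => ->; last by [].
    move=> HH; clear -HH; lia.
  have -> : i = t.+2 by clear -h2 hi2; lia.
  have haj : a != j by rewrite eq_sym.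
  have := @swap2 k (fun l => alpha t.+1 (z l)) (fun l => alpha t.+1 (x l)) a j haj.
  rewrite /= hza1 hzj1 !hfa => /(_ (fun l h1 h2 => congr1 _ (hzo l h1 h2))).
  move: hfull; rewrite /omega /= => ->.
  move=> HH; clear -HH; lia.
split => //.
split.
  by rewrite mdeg_mono pm_sum -hdeg (mdeg_xy hxy).
split; last by rewrite hom' //; clear -hk; lia.
case: (eqVneq l0 a) => [el|nl].
  exists a; rewrite hza; rewrite el in hl0.
  have hq : forall v, (2 ^ d <= v) = (2 ^ (d - t.+2) <= v %/ 2 ^ t %/ 4).
    have e4 : 2 ^ t * 4 = 2 ^ t.+2 by rewrite !expnSr -mulnA.
    move=> v; rewrite -divnMA e4 leq_divRL ?expn_gt0 // -expnD subnK //.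
  move: hl0; rewrite !hq ea.
  by rewrite ba3.
exists l0; apply: leq_trans hl0 _.
rewrite hz hxy (negbTE nl) mul0n addn0; exact: leq_addr.
Qed.

Lemma char2_cancel k (v w u : {mpoly 'F_2[k]}) : (v = (v + w + u) + w + u)%R.
Proof.
have e : ((v + w + u) + w + u = v + (w + w) + (u + u))%R by ring.
by rewrite e !char2 !addr0.
Qed.

Lemma step k d t (x : 'X_{1..k})
  (IHz : forall z : 'X_{1..k}, (forall i, 1 <= i < t.+3 -> omega i z = k - 2) ->
     mdeg z = (k - 2) * (2 ^ d - 1) -> (exists l : 'I_k, 2 ^ d <= z l) ->
     omega 1 z < k -> Dec d ('X_[z] : {mpoly 'F_2[k]})) :
  4 <= k -> t.+2 <= d ->
  (forall i, 1 <= i < t.+2 -> omega i x = k - 2) ->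
  omega t.+2 x = k ->
  mdeg x = (k - 2) * (2 ^ d - 1) ->
  (exists l : 'I_k, 2 ^ d <= x l) ->
  Dec d ('X_[x] : {mpoly 'F_2[k]}).
Proof.
move=> hk htd hom hfull hdeg hex.
have [a hxa] : exists a, alpha t (x a) = 0.
  apply: (@omega_notfull k t.+1 x); rewrite hom //; clear -hk; lia.
have hxa1 : alpha t.+1 (x a) = 1 by exact: (@omega_full k t.+2 x hfull).
have hPa : 2 ^ t <= x a.
  have h1 : 1 <= x a %/ 2 ^ t.+1 by move: hxa1; rewrite /alpha; case: (x a %/ _).
  rewrite leq_divRL ?expn_gt0 // mul1n in h1.
  apply: leq_trans h1; apply: leq_pexp2l => //.
pose y : 'X_{1..k} := [multinom (if j == a then x j - 2 ^ t else x j)%N | j < k].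
have hxy : forall l, x l = y l + (l == a) * 2 ^ t.
  move=> l; rewrite /y mnmE; case: (eqVneq l a) => [->|hl]; last by rewrite mul0n addn0.
  by rewrite mul1n subnK.
have hP : 0 < 2 ^ t by rewrite expn_gt0.
have hsq := Sqmon_split y hP.
have hya : odd (y a %/ 2 ^ t).
  by move: hxa; rewrite hxy eqxx mul1n /alpha divS2 oddD /=; case: odd.
have hCa : ('C(y a, 2 ^ t)%:R : 'F_2)%R = 1%R by rewrite F2nat lucas_pow.
have hma : mono y (pm (2 ^ t) a) = x.
  by apply/mnmP => l; rewrite mono_val pm_val hxy.
move: hsq; rewrite (bigD1 a) //= hCa scale1r hma => hsq.
move: hsq; set B := (\sum_(i < k | i != a) _)%R; set R := (\sum_(e | _) _)%R => hsq.
rewrite (char2_cancel ('X_[x] : {mpoly 'F_2[k]}) B R) -hsq.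
apply: DecD; last first.
  apply: Dec_P; apply: Pminus_sum => e /andP[he1 he2].
  apply: Pminus_term => hc.
  exact: (good_e htd hom hdeg hxy he1 he2 hc).
apply: DecD.
  apply: Dec_hit; rewrite -Sq_X.
  apply: (@hitdSq k d [:: 2 ^ t]) => //=.
  by rewrite hP /= ltn_exp2l //; clear -htd; lia.
apply: Dec_sum => j hj.
rewrite F2nat; case hC: (odd 'C(y j, 2 ^ t)); last by rewrite scale0r; exact: Dec0.
rewrite scale1r.
have [h1 [h2 [h3 h4]]] := z_props hk htd hom hfull hdeg hex hxy hxa hj hC.
exact: IHz.
Qed.


Lemma mainD k d : 4 <= k -> 1 <= d -> forall u s (x : 'X_{1..k}), s + u = d.+1 -> 1 <= s ->
  (forall i, 1 <= i < s -> omega i x = k - 2) ->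
  mdeg x = (k - 2) * (2 ^ d - 1) -> (exists l : 'I_k, 2 ^ d <= x l) ->
  omega 1 x < k -> Dec d ('X_[x] : {mpoly 'F_2[k]}).
Proof.
move=> hk hd; elim => [|u IH] s x hsu hs hom hdeg hex h1.
  exfalso; apply: (@base_contra k d x hdeg _ hex) => i /andP[i1 i2].
  apply: hom; apply/andP; split => //; clear -hsu i2; lia.
have hsd : s <= d by clear -hsu; lia.
case: (ltngtP (omega s x) (k - 2)) => hws.
- apply: Dec_P => m; rewrite msuppX inE => /eqP ->.
  split => //; exists s; split => //; split.
    move=> s' /andP[s1 s2]; rewrite /wtop s1 /=.
    have -> : s' <= d by clear -s2 hsd; lia.
    apply: hom; apply/andP; split => //.
  by rewrite /wtop hs hsd.
- have hle := @omega_le k s x.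
  have hne := @par k d s x (ltnW (ltnW hk)) (introT andP (conj hs hsd)) hdeg hom.
  have hwk : omega s x = k by clear -hws hle hne hk; lia.
  case: s hsu hs hom hws hsd hle hne hwk => [//|[|t]] hsu hs hom hws hsd hle hne hwk.
    by rewrite hwk ltnn in h1.
  apply: (step (t := t)) => //.
  move=> z hz1 hz2 hz3 hz4; apply: (IH t.+3) => //; clear -hsu; lia.
- apply: (IH s.+1) => //; first by clear -hsu; lia.
  move=> i /andP[i1 i2]; case: (ltngtP i s) => [hi|hi|->] //.
    by apply: hom; apply/andP.
  clear -i2 hi; lia.
Qed.

Local Open Scope ring_scope.
Theorem lemma3 (k d : nat) (x : 'X_{1..k}) :
  (4 <= k)%N -> (1 <= d)%N ->
  mdeg x = ((k - 2) * (2 ^ d - 1))%N ->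
  (omega 1 x < k)%N ->
  (exists r : nat, (d < r)%N /\ (0 < omega r x)%N) ->
  exists p q : {mpoly 'F_2[k]},
    Pminus d p /\ hitd d q /\ ('X_[x] : {mpoly 'F_2[k]}) = p + q.
Proof.
move=> hk hd hdeg h1 hr.
have hex := @hyp_conv k d x hr.
apply: (@mainD k d hk hd d 1 x) => //.
by move=> i /andP[i1 i2]; clear -i1 i2; lia.
Qed.
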